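(* Let $k\ge1$, let $a\ge b$ be the dimensions of irreducible algebraic sets $A,B\subset\mathbb{C}^k$, put $m=2k-a-b$, and let $h^*,h_0$ be integers with $b\ge h^*>\dim(A\cap B)$ and $\max(a+b-k,0)\le h_0\le$ the minimum dimension of any irreducible component of $A\cap B$. Let $\mathbb A,\mathbf B\in\mathbb{C}^{(a+b)\times k}$, $\mathbf C\in\mathbb{C}^{k\times 2k}$, $\mathbf d\in\mathbb{C}^k$ be generic, $\mathbf A=[\mathbb A\ \ -\mathbb A]$, $\mathbf Y_h=\mathbf A+\mathbf B\mathbf P_h\mathbf C$, and let $\epsilon\in\mathbb{C}^{2k}$ be the unique solution of $w_{1..k}-w_{k+1..2k}=0$, $\mathbf C w=-\mathbf d$ (so $\mathbf A\epsilon=0$ and $\mathbf C\epsilon+\mathbf d=0$). Fix $h_0\le j<i\le h^*$ and matrices $E\in\mathbb{C}^{2k\times(m-i+j)}$, $F,G\in\mathbb{C}^{2k\times(i-j)}$ such that the columns of $[E\ F]$ form a basis of $\ker\mathbf Y_i$, the columns of $[E\ G]$ form a basis of $\ker\mathbf Y_j$, and $\mathbf P_{ji}\mathbf CF=\mathbf P_{ji}\mathbf CG$ is the $k\times(i-j)$ matrix with $I_{i-j}$ in rows $j+1,\dots,i$ and zeros elsewhere. For $\gamma\in\mathbb{C}$, $t\in[0,1]$, $y\in\mathbb{C}^m$ define $$W_{i,j}(t,y)=\epsilon+\bigl[\,E\ \ \ tF+\gamma(1-t)G\,\bigr]y .$$ Then for all but finitely many $\gamma\in\mathbb{C}$ with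 $|\gamma|=1$, for every $t\in[0,1]$ there is $\tau\in\mathbb{C}$ (nonzero when $t\neq0$) such that the solution set in $\mathbb{C}^{2k}$ of the linear system $$\mathbf A w+\mathbf B(\mathbf P_j+\tau\mathbf P_{ji})(\mathbf C w+\mathbf d)=0$$ is exactly $\{W_{i,j}(t,y):y\in\mathbb{C}^m\}$.
   Context: $\mathbf P_h$ is the $k\times k$ diagonal matrix with $h$ ones followed by $k-h$ zeros; $\mathbf P_{ji}$ is the $k\times k$ diagonal matrix with $j$ zeros, then $i-j$ ones, then $k-i$ zeros. ''Generic'' means outside a proper algebraic subset of the parameter space (e.g. random complex entries). *)

(* Defs.v *)
From mathcomp Require Import all_boot all_algebra.
From mathcomp Require Import reals complex.
Set Implicit Arguments. Unset Strict Implicit. Unset Printing Implicit Defensive.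
Import GRing.Theory Num.Theory.
Local Open Scope ring_scope.

Inductive polyfun (T : Type) (K : nzRingType) (coord : (T -> K) -> Prop)
  : (T -> K) -> Prop :=
| pf_const (c : K) : polyfun coord (fun _ => c)
| pf_coord (f : T -> K) : coord f -> polyfun coord f
| pf_add (f g : T -> K) : polyfun coord f -> polyfun coord g ->
    polyfun coord (fun x => f x + g x)
| pf_mul (f g : T -> K) : polyfun coord f -> polyfun coord g ->
    polyfun coord (fun x => f x * g x).

Definition cV_coord (K : nzRingType) (k : nat) (f : 'cV[K]_k -> K) : Prop :=
  exists i : 'I_k, f = fun x => x i 0.

Definition poly_on (K : nzRingType) (k : nat) (f : 'cV[K]_k -> K) :=
  polyfun (@cV_coord K k) f.

Definition sub_pt (K : nzRingType) (k : nat) (S T : 'cV[K]_k -> Prop) :=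
  forall x, S x -> T x.
Definition eq_pt (K : nzRingType) (k : nat) (S T : 'cV[K]_k -> Prop) :=
  forall x, S x <-> T x.

Definition algebraic_set (K : nzRingType) (k : nat) (S : 'cV[K]_k -> Prop) :=
  exists (n : nat) (fs : 'I_n -> 'cV[K]_k -> K),
    (forall l, poly_on (fs l)) /\ (forall x, S x <-> forall l, fs l x = 0).

Definition irreducible_set (K : nzRingType) (k : nat) (S : 'cV[K]_k -> Prop) :=
  [/\ algebraic_set S, exists x, S x &
    forall S1 S2 : 'cV[K]_k -> Prop, algebraic_set S1 -> algebraic_set S2 ->
      eq_pt S (fun x => S1 x \/ S2 x) -> eq_pt S1 S \/ eq_pt S2 S].

Definition has_chain (K : nzRingType) (k : nat) (S : 'cV[K]_k -> Prop) (n : nat) :=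
  exists Z : nat -> 'cV[K]_k -> Prop,
    (forall l, (l <= n)%N -> irreducible_set (Z l) /\ sub_pt (Z l) S) /\
    (forall l, (l < n)%N -> sub_pt (Z l) (Z l.+1) /\ ~ sub_pt (Z l.+1) (Z l)).

(* (Krull) dimension of an algebraic set: the maximal length of a chain of
   irreducible algebraic subsets.  The empty set has no dimension in nat
   (it has dimension -1). *)
Definition alg_dim (K : nzRingType) (k : nat) (S : 'cV[K]_k -> Prop) (d : nat) :=
  has_chain S d /\ ~ has_chain S d.+1.

Definition irr_component (K : nzRingType) (k : nat) (Z S : 'cV[K]_k -> Prop) :=
  [/\ irreducible_set Z, sub_pt Z S &
    forall Z', irreducible_set Z' -> sub_pt Z Z' -> sub_pt Z' S -> sub_pt Z' Z].

Definition params (K : nzRingType) (a b k : nat) : Type :=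
  ('M[K]_(a + b, k) * 'M[K]_(a + b, k) * 'M[K]_(k, k + k) * 'cV[K]_k)%type.

Definition param_coord (K : nzRingType) (a b k : nat)
    (f : params K a b k -> K) : Prop :=
  (exists (r : 'I_(a + b)) (c : 'I_k), f = fun p => p.1.1.1 r c) \/
  (exists (r : 'I_(a + b)) (c : 'I_k), f = fun p => p.1.1.2 r c) \/
  (exists (r : 'I_k) (c : 'I_(k + k)), f = fun p => p.1.2 r c) \/
  (exists (r : 'I_k), f = fun p => p.2 r 0).

(* "generic": holds outside a proper algebraic subset of the parameter space,
   i.e. wherever some not-identically-zero polynomial does not vanish *)
Definition generic_params (K : nzRingType) (a b k : nat)
    (P : params K a b k -> Prop) : Prop :=
  exists f : params K a b k -> K,
    [/\ polyfun (@param_coord K a b k) f, exists p, f p != 0 &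
        forall p, f p != 0 -> P p].

Definition Pmx (K : nzRingType) (k h : nat) : 'M[K]_k :=
  \matrix_(r < k, c < k) ((r == c) && (r < h)%N)%:R.

Definition Pji (K : nzRingType) (k j i : nat) : 'M[K]_k :=
  \matrix_(r < k, c < k) [&& r == c, (j <= r)%N & (r < i)%N]%:R.

(* the k x (i-j) matrix with I_{i-j} in rows j+1..i (1-based), 0 elsewhere *)
Definition Jmx (K : nzRingType) (k j i : nat) : 'M[K]_(k, i - j) :=
  \matrix_(r < k, c < i - j) (r == j + c :> nat)%:R.

Definition col_basis_of_ker (K : nzRingType) (p q r : nat)
    (M : 'M[K]_(p, q)) (Y : 'M[K]_(r, p)) : Prop :=
  (forall y : 'cV[K]_q, M *m y = 0 -> y = 0) /\
  (forall w : 'cV[K]_p, Y *m w = 0 <-> exists y : 'cV[K]_q, w = M *m y).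

(* Main.v *)
Require Import Defs.
From mathcomp Require Import all_boot all_algebra fingroup perm zify ring.
From mathcomp Require Import reals complex.
From Stdlib Require Import FunctionalExtensionality.
Set Implicit Arguments. Unset Strict Implicit. Unset Printing Implicit Defensive.
Import GRing.Theory Num.Theory.
Local Open Scope ring_scope.
Section M.
Variable K : fieldType.

Lemma Pmx_split k j i : (j <= i)%N -> Pmx K k i = Pmx K k j + Pji K k j i.
Proof.
move=> hji; apply/matrixP => r c; rewrite !mxE.
case: eqP => _ //=; last by rewrite addr0.
case: (ltnP r j) => h1 /=.
  by rewrite (leq_trans h1 hji) addr0.
by rewrite add0r.
Qed.

Lemma Pji_mulE k j i p (X : 'M[K]_(k, p)) r c :
  (Pji K k j i *m X) r c = ((j <= r)%N && (r < i)%N)%:R * X r c.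
Proof.
rewrite !mxE (bigD1 r) //= big1 ?addr0; first by rewrite !mxE eqxx.
by move=> s /negPf hs; rewrite !mxE eq_sym hs mul0r.
Qed.

Lemma Pji_idem k j i p (X : 'M[K]_(k, p)) :
  Pji K k j i *m (Pji K k j i *m X) = Pji K k j i *m X.
Proof.
apply/matrixP => r c; rewrite !Pji_mulE mulrA -natrM.
by case: ((j <= r)%N && (r < i)%N).
Qed.

Lemma ordJ_proof k j i (c : 'I_(i - j)) : (i <= k)%N -> (j + c < k)%N.
Proof. move: (ltn_ord c) => h1 h2; lia. Qed.

Definition ordJ k j i (hik : (i <= k)%N) (c : 'I_(i - j)) : 'I_k :=
  Ordinal (ordJ_proof c hik).

Lemma Jmx_at k j i (u : 'cV[K]_(i - j)) (c : 'I_(i - j)) (r : 'I_k) :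
  nat_of_ord r = (j + c)%N -> (Jmx K k j i *m u) r 0 = u c 0.
Proof.
move=> hr; rewrite !mxE (bigD1 c) //= big1 ?addr0; first by rewrite !mxE hr eqxx mul1r.
move=> c' hc; rewrite !mxE hr eqn_add2l; case: eqP => [e|_]; last by rewrite mul0r.
by move: hc; rewrite (val_inj e) eqxx.
Qed.

Lemma Jmx_inj k j i (hik : (i <= k)%N) (u : 'cV[K]_(i - j)) :
  Jmx K k j i *m u = 0 -> u = 0.
Proof.
move=> h; apply/matrixP => c z; rewrite (ord1 z).
by rewrite -(Jmx_at u (r := ordJ hik c)) // h !mxE.
Qed.

Lemma Jmx_surj k j i (hik : (i <= k)%N) (x : 'cV[K]_k) :
  exists z, Jmx K k j i *m z = Pji K k j i *m x.
Proof.
exists (\col_c x (ordJ hik c) 0).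
apply/matrixP => r z; rewrite (ord1 z) Pji_mulE.
case hr: ((j <= r)%N && (r < i)%N).
  have hc : (r - j < i - j)%N by move/andP: hr => [h1 h2]; lia.
  rewrite (Jmx_at _ (c := Ordinal hc)) /=; last by move/andP: hr => [h1 h2]; lia.
  rewrite !mxE mul1r; congr (x _ 0); apply: val_inj => /=; move/andP: hr => [h1 h2]; lia.
rewrite mul0r !mxE big1 // => c _; rewrite !mxE.
case: eqP => e; last by rewrite mul0r.
by move: hr (ltn_ord c); rewrite e; lia.
Qed.

End M.

Lemma gen_inj (K : fieldType) (ab k n j i p : nat) (hn1 : (n <= ab)%N) (hn2 : (n <= k)%N)
  (Bm : 'M[K]_(ab, k)) :
  \det (\matrix_(r < n, c < n) Bm (widen_ord hn1 r) (widen_ord hn2 c)) != 0 ->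
  (i <= n)%N ->
  forall X : 'M[K]_(k, p), Bm *m (Pji K k j i *m X) = 0 -> Pji K k j i *m X = 0.
Proof.
move=> hdet hin X hB.
set X0 := Pji K k j i *m X in hB *.
have hz : forall (s : 'I_k) (c : 'I_p), (n <= s)%N -> X0 s c = 0.
  by move=> s c hs; rewrite /X0 Pji_mulE; rewrite ltnNge (leq_trans hin hs) andbF mul0r.
set B' := \matrix_(r < n, c < n) Bm (widen_ord hn1 r) (widen_ord hn2 c).
set X' : 'M[K]_(n, p) := \matrix_(r, c) X0 (widen_ord hn2 r) c.
have hBX : B' *m X' = 0.
  apply/matrixP => r c; rewrite [RHS]mxE.
  rewrite -(_ : (Bm *m X0) (widen_ord hn1 r) c = 0); last by rewrite hB mxE.
  rewrite !mxE.
  rewrite [RHS](bigID (fun s : 'I_k => (s < n)%N)) /= [X in _ = _ + X]big1 ?addr0; last first.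
    by move=> s; rewrite -leqNgt => hs; rewrite hz // mulr0.
  rewrite (big_ord_narrow hn2).
  by apply: eq_bigr => s _; rewrite !mxE.
have hU : B' \in unitmx by rewrite unitmxE unitfE.
have hX' : X' = 0 by rewrite -(mulKmx hU X') hBX mulmx0.
apply/matrixP => s c; rewrite [RHS]mxE.
case: (ltnP s n) => hs; last exact: hz.
have e : widen_ord hn2 (Ordinal hs) = s by apply: val_inj.
rewrite -e; move: (congr1 (fun M : 'M[K]_(n, p) => M (Ordinal hs) c) hX').
by rewrite !mxE.
Qed.

Lemma pf_ext (T : Type) (K : nzRingType) (coord : (T -> K) -> Prop) f g :
  polyfun coord f -> (forall x, f x = g x) -> polyfun coord g.
Proof. by move=> H E; have <- : f = g by apply: functional_extensionality. Qed.

Lemma pf_sum (T : Type) (K : nzRingType) (coord : (T -> K) -> Prop)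
  (I : Type) (r : seq I) (P : pred I) (g : I -> T -> K) :
  (forall i, polyfun coord (g i)) ->
  polyfun coord (fun x => \sum_(i <- r | P i) g i x).
Proof.
move=> H; elim: r => [|y r IH].
  by apply: (@pf_ext _ _ _ (fun _ => 0)); [exact: pf_const | move=> x; rewrite big_nil].
case Py: (P y).
  apply: (pf_ext (pf_add (H y) IH)) => x; by rewrite big_cons Py.
by apply: (pf_ext IH) => x; rewrite big_cons Py.
Qed.

Lemma pf_prod (T : Type) (K : nzRingType) (coord : (T -> K) -> Prop)
  (I : Type) (r : seq I) (P : pred I) (g : I -> T -> K) :
  (forall i, polyfun coord (g i)) ->
  polyfun coord (fun x => \prod_(i <- r | P i) g i x).
Proof.
move=> H; elim: r => [|y r IH].
  by apply: (@pf_ext _ _ _ (fun _ => 1)); [exact: pf_const | move=> x; rewrite big_nil].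
case Py: (P y).
  apply: (pf_ext (pf_mul (H y) IH)) => x; by rewrite big_cons Py.
by apply: (pf_ext IH) => x; rewrite big_cons Py.
Qed.

Lemma kerP (K : nzRingType) p q1 q2 r (E : 'M[K]_(p, q1)) (F : 'M[K]_(p, q2))
  (Y : 'M[K]_(r, p)) :
  col_basis_of_ker (row_mx E F) Y -> Y *m E = 0 /\ Y *m F = 0.
Proof.
move=> [_ H].
have : Y *m row_mx E F = 0.
  apply/matrixP => x c.
  have h := (H (row_mx E F *m delta_mx c 0)).2 (ex_intro _ _ erefl).
  have := congr1 (fun M : 'cV[K]_r => M x 0) h.
  by rewrite mulmxA -colE !mxE => ->.
by rewrite mul_mx_row -row_mx0 => /eq_row_mx.
Qed.

Local Open Scope complex_scope.
Lemma normC_ge0 (R : realType) (x : R) : 0 <= x -> `|x%:C| = x%:C.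
Proof. by move=> h; rewrite ger0_norm // lecR. Qed.

Lemma s_neq0 (R : realType) (g : R[i]) (t : R) :
  `|g| = 1 -> g != -1 -> 0 <= t <= 1 -> t%:C + g * (1 - t)%:C != 0.
Proof.
move=> ng gn /andP[t0 t1]; apply/negP => /eqP h.
have h1 : g * (1 - t)%:C = - t%:C by apply/eqP; rewrite -addr_eq0 addrC h.
have := congr1 (fun z => `|z|) h1; rewrite /= normrM ng mul1r normrN !normC_ge0 ?subr_ge0 //.
move/complexI => e.
have tn0 : t != 0 by apply/eqP => t0'; move: e; rewrite t0' subr0 => /eqP; rewrite oner_eq0.
move: h1; rewrite e => /eqP; rewrite -mulN1r (inj_eq (mulIf _)) ?(negbTE gn) //.
by rewrite -[0]/(0%:C) (inj_eq (@complexI _)).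
Qed.

Lemma expand_eq (K : fieldType) r q k (Am : 'M[K]_(r, q)) (Bm : 'M[K]_(r, k))
  (P Q : 'M[K]_k) (Cm : 'M[K]_(k, q)) (v : 'cV[K]_q) (tau : K) :
  Am *m v + Bm *m (P + tau *: Q) *m (Cm *m v)
  = (Am + Bm *m P *m Cm + tau *: (Bm *m Q *m Cm)) *m v.
Proof.
rewrite mulmxDr !mulmxDl -addrA; congr (_ + (_ + _)); first by rewrite !mulmxA.
by rewrite !mulmxA -scalemxAr -!scalemxAl.
Qed.

Theorem lemma2p3 (R : realType) (k a b hs h0 : nat)
    (A B : 'cV[R[i]]_k -> Prop) :
  (1 <= k)%N ->
  irreducible_set A -> irreducible_set B ->
  alg_dim A a -> alg_dim B b -> (b <= a)%N ->
  (hs <= b)%N ->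
  (forall d, alg_dim (fun x => A x /\ B x) d -> (d < hs)%N) ->
  (a + b <= k + h0)%N ->
  (forall Z, irr_component Z (fun x => A x /\ B x) ->
     forall d, alg_dim Z d -> (h0 <= d)%N) ->
  let m := (k + k - (a + b))%N in
  generic_params (fun p : params R[i] a b k =>
    let: (AA, Bm, Cm, dv) := p in
    let Am := row_mx AA (- AA) in
    let Y h := Am + Bm *m Pmx R[i] k h *m Cm in
    forall eps : 'cV[R[i]]_(k + k),
      usubmx eps - dsubmx eps = 0 -> Cm *m eps = - dv ->
    forall j i : nat, (h0 <= j)%N -> (j < i)%N -> (i <= hs)%N ->
    forall (E : 'M[R[i]]_(k + k, m - (i - j)))
           (F G : 'M[R[i]]_(k + k, i - j)),
      col_basis_of_ker (row_mx E F) (Y i) ->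
      col_basis_of_ker (row_mx E G) (Y j) ->
      Pji R[i] k j i *m Cm *m F = Jmx R[i] k j i ->
      Pji R[i] k j i *m Cm *m G = Jmx R[i] k j i ->
      exists S : seq R[i], forall gamma : R[i],
        `|gamma| = 1 -> gamma \notin S ->
        forall t : R, 0 <= t <= 1 ->
        exists tau : R[i], (t != 0 -> tau != 0) /\
          forall w : 'cV[R[i]]_(k + k),
            Am *m w + Bm *m (Pmx R[i] k j + tau *: Pji R[i] k j i)
                       *m (Cm *m w + dv) = 0
            <-> exists y : 'cV[R[i]]_(m - (i - j) + (i - j)),
                  w = eps + row_mx E (t%:C *: F + (gamma * (1 - t)%:C) *: G) *m y).
Proof.
move=> hk irrA irrB dA dB hba hsb hdim hab hcomp m.
pose n := minn hs k.
have hn2 : (n <= k)%N by rewrite geq_minr.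
have hn1 : (n <= a + b)%N by rewrite /n; lia.
pose fdet (p : params R[i] a b k) :=
  \det (\matrix_(r < n, c < n) p.1.1.2 (widen_ord hn1 r) (widen_ord hn2 c)).
exists fdet; split.
- apply: (@pf_ext _ _ _ (fun p : params R[i] a b k => \sum_(s : 'S_n)
     ((-1) ^+ s * \prod_(r < n) p.1.1.2 (widen_ord hn1 r) (widen_ord hn2 (s r))))).
    apply: pf_sum => s; apply: pf_mul; first exact: pf_const.
    apply: pf_prod => r; apply: pf_coord; right; left.
    by exists (widen_ord hn1 r), (widen_ord hn2 (s r)).
  move=> p; rewrite /fdet /determinant; apply: eq_bigr => s _; congr (_ * _).
  by apply: eq_bigr => r _; rewrite mxE.
- exists (0, \matrix_(r < a + b, c < k) (r == c :> nat)%:R, 0, 0).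
  rewrite /fdet /=.
  rewrite (_ : \matrix_(r < n, c < n) _ = 1%:M) ?det1 ?oner_neq0 //.
  by apply/matrixP => r c; rewrite !mxE.
- move=> [[[AA Bm] Cm] dv] hf Am Y eps heps1 heps2 j i hj hji his E F G kerI kerJ hF hG.
  have hik : (i < k)%N by lia.
  have hin : (i <= n)%N by rewrite leq_min his ltnW.
  set Q := Pji R[i] k j i in hF hG *.
  set J := Jmx R[i] k j i in hF hG *.
  have hAe : Am *m eps = 0.
    by rewrite /Am -[eps](vsubmxK eps) mul_row_col mulNmx -mulmxBr heps1 mulmx0.
  have [YiE YiF] := kerP kerI.
  have [YjE YjG] := kerP kerJ.
  have hYi : Y i = Y j + Bm *m Q *m Cm.
    by rewrite /Y (Pmx_split _ _ (ltnW hji)) mulmxDr mulmxDl addrA.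
  have hQE : Q *m (Cm *m E) = 0.
    apply: (gen_inj hf hin).
    by move: YiE; rewrite hYi mulmxDl YjE add0r -!mulmxA.
  have hBQE : Bm *m Q *m Cm *m E = 0 by rewrite -!mulmxA hQE mulmx0.
  have hYjF : Y j *m F = - (Bm *m J).
    apply/eqP; rewrite -addr_eq0; apply/eqP.
    by move: YiF; rewrite hYi mulmxDl -hF !mulmxA.
  have hBQG : Bm *m Q *m Cm *m G = Bm *m J by rewrite -hG !mulmxA.
  have hBQF : Bm *m Q *m Cm *m F = Bm *m J by rewrite -hF !mulmxA.
  exists [:: -1] => g ng; rewrite inE => gn t ht.
  have sn0 := s_neq0 ng gn ht.
  set c := g * (1 - t)%:C in sn0 *.
  set T := t%:C in sn0 *.
  set s := T + c in sn0.
  exists (T / s); split.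
    move=> tn0; rewrite mulf_neq0 ?invr_eq0 //.
    by rewrite /T -[0]/(0%:C) (inj_eq (@complexI _)).
  pose Mt := Y j + (T / s) *: (Bm *m Q *m Cm).
  have key : forall w, Am *m w + Bm *m (Pmx R[i] k j + (T / s) *: Q) *m (Cm *m w + dv)
      = Mt *m (w - eps).
    move=> w.
    have -> : Cm *m w + dv = Cm *m (w - eps) by rewrite mulmxBr heps2 opprK.
    have -> : Am *m w = Am *m (w - eps) by rewrite mulmxBr hAe subr0.
    by rewrite expand_eq.
  move=> w; rewrite key; split.
  + move=> hM; set v := w - eps in hM.
    have [z hz] := Jmx_surj j (ltnW hik) (Cm *m v).
    have e1 : Bm *m Q *m Cm *m v = Bm *m J *m z by rewrite -!mulmxA hz.
    have hYv : Y j *m v = - ((T / s) *: (Bm *m J *m z)).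
      apply/eqP; rewrite -addr_eq0; apply/eqP.
      by move: hM; rewrite /Mt mulmxDl -scalemxAl e1.
    have hker : Y j *m (v - (T / s) *: (F *m z)) = 0.
      by rewrite mulmxBr -scalemxAr mulmxA hYjF hYv mulNmx scalerN opprK addNr.
    have [y' hy'] := (kerJ.2 _).1 hker.
    rewrite -[y'](vsubmxK y') mul_row_col in hy'.
    set y1 := usubmx y' in hy'; set y2 := dsubmx y' in hy'.
    have e2 : (Q *m Cm) *m (E *m y1 + G *m y2) = J *m y2.
      by rewrite mulmxDr !mulmxA -(mulmxA Q Cm E) hQE mul0mx add0r hG.
    have e3 : (Q *m Cm) *m (v - (T / s) *: (F *m z)) = (1 - T / s) *: (J *m z).
      rewrite mulmxBr -scalemxAr (mulmxA _ F) hF -(mulmxA Q Cm v) -hz.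
      by rewrite scalerBl scale1r.
    have hy2 : y2 = (1 - T / s) *: z.
      apply/eqP; rewrite -subr_eq0; apply/eqP; apply: (Jmx_inj (ltnW hik)).
      by rewrite mulmxBr -scalemxAr -e2 -hy' e3 subrr.
    exists (col_mx y1 (s^-1 *: z)).
    rewrite mul_row_col.
    have hw : w = eps + v by rewrite /v addrC subrK.
    rewrite hw; congr (_ + _).
    rewrite -[v](subrK ((T / s) *: (F *m z))) hy' hy2 -addrA; congr (_ + _).
    rewrite mulmxDl -!scalemxAr -!scalemxAl !scalerA addrC.
    by congr (_ *: _ + _ *: _); rewrite /s; field; exact: sn0.
  + move=> [y ->].
    rewrite (addrC eps) addrK mulmxA.
    have hMF : Mt *m F = (T / s - 1) *: (Bm *m J).
      by rewrite /Mt mulmxDl hYjF -scalemxAl hBQF scalerBl scale1r addrC.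
    have hMG : Mt *m G = (T / s) *: (Bm *m J).
      by rewrite /Mt mulmxDl YjG add0r -scalemxAl hBQG.
    have hME : Mt *m E = 0.
      by rewrite /Mt mulmxDl YjE add0r -scalemxAl hBQE scaler0.
    rewrite mul_mx_row hME mulmxDr -!scalemxAr hMF hMG !scalerA -scalerDl.
    have -> : T * (T / s - 1) + c * (T / s) = 0 by rewrite /s; field; exact: sn0.
    by rewrite scale0r row_mx0 mul0mx.
Qed.
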